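(* Let $G$ be a graph with $n$ vertices and $m$ edges such that $\omega(G)=\chi(G)$ (i.e. $G$ is weakly perfect), and write $\omega=\omega(G)$. Let $\mu_1\ge\mu_2\ge\cdots\ge\mu_n$ be the eigenvalues of the adjacency matrix of $G$, let $n^+$ be the number of positive eigenvalues, and let $\ell=\min(n^+,\omega)$. Then \[ \mu_1^2+\mu_2^2+\cdots+\mu_\ell^2\le \frac{2m(\omega-1)}{\omega}. \]
   Context: $\omega(G)$ denotes the clique number and $\chi(G)$ the chromatic number of $G$. Eigenvalues are those of the adjacency matrix. An empty sum (when $\ell=0$) equals $0$. *)

(* Defs.v *)
From mathcomp Require Import all_boot all_order all_algebra.
Set Implicit Arguments. Unset Strict Implicit. Unset Printing Implicit Defensive.
Import Order.TTheory GRing.Theory Num.Theory.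

Definition simple_graph (T : finType) (e : rel T) : Prop :=
  symmetric e /\ irreflexive e.

Definition num_edges (T : finType) (e : rel T) : nat :=
  #|[set [set x; y] | x in T, y in T & e x y]|.

Definition is_clique (T : finType) (e : rel T) (K : {set T}) : bool :=
  [forall x in K, forall y in K, (x != y) ==> e x y].

Definition clique_number (T : finType) (e : rel T) : nat :=
  \max_(K : {set T} | is_clique e K) #|K|.

Definition colorable (T : finType) (e : rel T) (k : nat) : bool :=
  [exists f : {ffun T -> 'I_k}, [forall x, forall y, e x y ==> (f x != f y)]].

Lemma colorable_exists (T : finType) (e : rel T) (irr : irreflexive e) :
  exists k, colorable e k.
Proof.
exists #|T|; apply/existsP; exists [ffun x => enum_rank x].
apply/forallP => x; apply/forallP => y; apply/implyP => exy.
rewrite !ffunE; apply/negP => /eqP /enum_rank_inj Exy.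
by move: exy; rewrite Exy irr.
Qed.

Definition chromatic_number (T : finType) (e : rel T) (irr : irreflexive e) : nat :=
  ex_minn (colorable_exists irr).

Definition adj_matrix (R : nzRingType) (T : finType) (e : rel T) : 'M[R]_#|T| :=
  \matrix_(i, j) ((e (enum_val i) (enum_val j))%:R)%R.

Definition sorted_eigenvalues (R : rcfType) (n : nat) (A : 'M[R]_n) (s : seq R) : Prop :=
  (char_poly A = \prod_(x <- s) ('X - x%:P))%R /\ sorted (fun x y : R => y <= x)%R s.

(* Main.v *)
Require Import Defs.
From mathcomp Require Import all_boot all_order all_algebra.
From mathcomp Require Import complex.
From mathcomp Require Import ring lra.
Import Order.TTheory GRing.Theory Num.Theory Num.Def.
Local Open Scope complex_scope.
Local Open Scope ring_scope.
Section Core.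
Variable R : rcfType.
Local Notation C := (R[i]).
Local Notation Re := (@complex.Re R).
Local Notation Im := (@complex.Im R).

Definition sq (z : C) : R := Re z ^+ 2 + Im z ^+ 2.
Definition ip (x y : C) : R := Re x * Re y + Im x * Im y.

Lemma Re_conjM (x y : C) : Re (conjC x * y) = ip x y.
Proof. case: x => a b; case: y => c d; rewrite /ip /=; ring. Qed.

Lemma Re_conjMM (x : C) : Re (conjC x * x) = sq x.
Proof. by rewrite Re_conjM /ip /sq !expr2. Qed.

Lemma sq_ge0 x : 0 <= sq x.
Proof. by rewrite /sq addr_ge0 // sqr_ge0. Qed.

Lemma sq_expand (x y : C) (t : R) : sq (x + t%:C * y) = sq x + 2 * t * ip x y + t ^+ 2 * sq y.
Proof. case: x => a b; case: y => c d; rewrite /sq /ip /=; ring. Qed.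

Lemma Re_sum I (r : seq I) (P : pred I) (F : I -> C) :
  Re (\sum_(i <- r | P i) F i) = \sum_(i <- r | P i) Re (F i).
Proof. by elim/big_rec2: _ => // i y1 y2 _ <-; case: (F i); case: y2. Qed.

Lemma Im_sum I (r : seq I) (P : pred I) (F : I -> C) :
  Im (\sum_(i <- r | P i) F i) = \sum_(i <- r | P i) Im (F i).
Proof. by elim/big_rec2: _ => // i y1 y2 _ <-; case: (F i); case: y2. Qed.

Lemma cs_real k (u : 'I_k -> R) : (\sum_a u a) ^+ 2 <= k%:R * \sum_a (u a) ^+ 2.
Proof.
have H : 0 <= \sum_a \sum_b (u a - u b) ^+ 2 by apply: sumr_ge0 => a _; apply: sumr_ge0 => b _; apply: sqr_ge0.
have E : \sum_a \sum_b (u a - u b) ^+ 2 = 2 * (k%:R * \sum_a (u a) ^+ 2) - 2 * (\sum_a u a) ^+ 2.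
  transitivity (\sum_a \sum_b ((u a)^+2 + (u b)^+2 + (-2) * (u a * u b))).
    by apply: eq_bigr => a _; apply: eq_bigr => b _; ring.
  under eq_bigr => a _ do rewrite !big_split /=.
  rewrite !big_split /=.
  have e1 : \sum_(a<k) \sum_(b<k) u a ^+2 = k%:R * \sum_a u a ^+2.
    by rewrite mulr_sumr; apply: eq_bigr => a _; rewrite sumr_const card_ord mulr_natl.
  have e2 : \sum_(a<k) \sum_(b<k) u b ^+2 = k%:R * \sum_b u b ^+2.
    by rewrite sumr_const card_ord mulr_natl.
  have e3 : \sum_(a<k) \sum_(b<k) (-2) * (u a * u b) = -2 * (\sum_a u a)^+2.
    by rewrite expr2 big_distrlr mulr_sumr; apply: eq_bigr => a _; rewrite mulr_sumr.
  rewrite e1 e2 e3; ring.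
lra.
Qed.

Lemma cs_sq k (x : 'I_k -> C) : sq (\sum_a x a) <= k%:R * \sum_a sq (x a).
Proof.
rewrite /sq Re_sum Im_sum big_split /= mulrDr.
by apply: lerD; apply: cs_real.
Qed.

Lemma final_arith (k d p q : R) : 1 <= k -> 0 <= d -> 0 <= p -> 0 <= q ->
  d + p <= k * d -> 0 <= p + 2 * (k - 1) * (- d) + (k - 1) ^+ 2 * q ->
  (k = 1 -> d = 0) ->
  k * (d + p) <= (k - 1) * ((d + p) + (d + q)).
Proof.
move=> hk hd hp hq h1 h2 h3.
have [ek|hk1] := eqVneq k 1.
  have d0 := h3 ek; rewrite ek in h1 *; lra.
have hK : 0 < k - 1 by rewrite lt_neqAle subr_ge0 hk andbT eq_sym subr_eq0.
have hdq : d <= (k - 1) * q.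
  have : (k - 1) * d <= (k - 1) * ((k - 1) * q) by nra.
  by rewrite ler_pM2l.
nra.
Qed.
Lemma keyH n (Z W : 'M[C]_n) (S S' : pred 'I_n) :
 \sum_(i | S i) \sum_(j | S' j)
    (conjC (\sum_s conjC (Z s i) * Z s j)) * (\sum_s conjC (W s i) * W s j)
 = \sum_r \sum_s (\sum_(i | S i) Z r i * conjC (W s i)) *
                 (\sum_(j | S' j) conjC (Z r j) * W s j).
Proof.
transitivity (\sum_(i | S i) \sum_(j | S' j) \sum_r \sum_s
   (Z r i * conjC (W s i)) * (conjC (Z r j) * W s j)).
  apply: eq_bigr => i _; apply: eq_bigr => j _.
  rewrite rmorph_sum /= big_distrlr /=.
  apply: eq_bigr => r _; apply: eq_bigr => s _.
  rewrite rmorphM /= conjCK.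
  rewrite -!mulrA; congr (_ * _); rewrite mulrC -!mulrA; congr (_ * _); by rewrite mulrC.
transitivity (\sum_r \sum_s \sum_(i | S i) \sum_(j | S' j)
   (Z r i * conjC (W s i)) * (conjC (Z r j) * W s j)).
  under eq_bigr => i _ do rewrite exchange_big /=.
  rewrite exchange_big /=; apply: eq_bigr => r _.
  under eq_bigr => i _ do rewrite exchange_big /=.
  by rewrite exchange_big.
apply: eq_bigr => r _; apply: eq_bigr => s _.
by rewrite big_distrlr.
Qed.
Lemma conjCR (x : R) : conjC (x%:C : C) = x%:C.
Proof. exact: conjc_real. Qed.

Lemma keyH' n (Z W : 'M[C]_n) (S S' : pred 'I_n) :
 \sum_(i | S i) \sum_(j | S' j)
    (conjC (\sum_s conjC (Z s i) * Z s j)) * (\sum_s conjC (W s i) * W s j)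
 = \sum_r \sum_s (\sum_(i | S i) Z r i * conjC (W s i)) *
                 conjC (\sum_(j | S' j) Z r j * conjC (W s j)).
Proof.
rewrite keyH; apply: eq_bigr => r _; apply: eq_bigr => s _; congr (_ * _).
by rewrite rmorph_sum; apply: eq_bigr => j _; rewrite rmorphM /= conjCK.
Qed.

Lemma sq_sub (x y : C) : sq (x - y) = sq x - 2 * ip x y + sq y.
Proof. case: x => a b; case: y => c d; rewrite /sq /ip /=; ring. Qed.

Lemma ip_sym (x y : C) : ip x y = ip y x.
Proof. by rewrite /ip mulrC [Im x * _]mulrC. Qed.

Lemma ip_sq (x : C) : ip x x = sq x.
Proof. by rewrite /ip /sq !expr2. Qed.

Lemma sqR (x : R) : sq (x%:C) = x ^+ 2.
Proof. by rewrite /sq /= expr0n /= addr0. Qed.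

Lemma delta_sum n r (F G : 'I_n -> C) :
  \sum_s (F s * (r == s)%:R) * (G s * (r == s)%:R) = F r * G r.
Proof.
rewrite (bigD1 r) //= eqxx !mulr1 big1 ?addr0 // => s hs.
by rewrite eq_sym (negbTE hs) !mulr0.
Qed.
End Core.
Arguments sq {R}.
Arguments ip {R}.

Section Spec.
Variable R : rcfType.
Local Notation C := (R[i]).
Local Notation Re := (@complex.Re R).
Local Notation Im := (@complex.Im R).
Variables (n k : nat) (Q : 'M[C]_n) (L : 'I_n -> R) (A : 'M[R]_n) (col : 'I_n -> 'I_k).
Hypothesis hQ : forall r s, \sum_i Q r i * conjC (Q s i) = (r == s)%:R.
Hypothesis hA : forall i j, (A i j)%:C = \sum_r conjC (Q r i) * (L r)%:C * Q r j.
Hypothesis hcol : forall i j, col i = col j -> A i j = 0.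
Hypothesis hk : (0 < k)%N.

Definition gp r := Num.sqrt (Num.max (L r) 0).
Definition gn r := Num.sqrt (Num.max (- L r) 0).
Definition Zm (g : 'I_n -> R) : 'M[C]_n := \matrix_(r, i) ((g r)%:C * Q r i).
Definition PP (Z : 'M[C]_n) i j := \sum_s conjC (Z s i) * Z s j.

Lemma ZZ (a b : 'I_n -> R) r s :
  \sum_i Zm a r i * conjC (Zm b s i) = (a r * b s)%:C * (r == s)%:R.
Proof.
rewrite -hQ mulr_sumr; apply: eq_bigr => i _; rewrite !mxE rmorphM /= conjCR rmorphM /=.
ring.
Qed.

Lemma gp2 r : gp r ^+ 2 = Num.max (L r) 0.
Proof. by rewrite sqr_sqrtr // le_max lexx orbT. Qed.
Lemma gn2 r : gn r ^+ 2 = Num.max (- L r) 0.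
Proof. by rewrite sqr_sqrtr // le_max lexx orbT. Qed.

Lemma conj_rd (x : R) (b : bool) : conjC (x%:C * b%:R) = x%:C * b%:R.
Proof. by rewrite rmorphM /= conjCR rmorph_nat. Qed.

Lemma F_same (a : 'I_n -> R) :
  \sum_i \sum_j conjC (PP (Zm a) i j) * PP (Zm a) i j = \sum_r ((a r ^+ 2) ^+ 2)%:C.
Proof.
rewrite keyH'; apply: eq_bigr => r _.
under eq_bigr => s _ do rewrite !ZZ conj_rd.
rewrite delta_sum; rewrite -rmorphM /=; congr (_%:C); ring.
Qed.

Lemma gpgn r : gp r * gn r = 0.
Proof.
rewrite /gp /gn -sqrtrM ?le_max ?lexx ?orbT //.
case: (lerP 0 (L r)) => h.
  by rewrite (max_r (_ : - L r <= 0)) ?mulr0 ?sqrtr0 // oppr_le0.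
by rewrite mul0r sqrtr0.
Qed.

Lemma F_cross :
  \sum_i \sum_j conjC (PP (Zm gp) i j) * PP (Zm gn) i j = 0.
Proof.
rewrite keyH'; apply: big1 => r _.
under eq_bigr => s _ do rewrite !ZZ conj_rd.
by rewrite delta_sum gpgn mul0r.
Qed.

Lemma F_A i j : (A i j)%:C = PP (Zm gp) i j - PP (Zm gn) i j.
Proof.
rewrite hA /PP -sumrB; apply: eq_bigr => r _; rewrite !mxE !rmorphM /= !conjCR.
have -> : L r = gp r ^+ 2 - gn r ^+ 2.
  rewrite gp2 gn2; case: (lerP 0 (L r)) => h.
    by rewrite (max_r (_ : - L r <= 0)) ?subr0 // oppr_le0.
  by rewrite (max_l (_ : 0 <= - L r)) ?sub0r ?opprK // oppr_ge0 ltW.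
rewrite rmorphB /= !rmorphXn /=; ring.
Qed.
Lemma dsumE (I J : finType) (Pr : I -> J -> bool) (f g h : I -> J -> R) (a b : R) :
  \sum_i \sum_(j | Pr i j) (f i j + a * g i j + b * h i j) =
  \sum_i \sum_(j | Pr i j) f i j + a * \sum_i \sum_(j | Pr i j) g i j
   + b * \sum_i \sum_(j | Pr i j) h i j.
Proof.
rewrite !mulr_sumr -!big_split; apply: eq_bigr => i _.
by rewrite !mulr_sumr -!big_split.
Qed.

Lemma sq_key (Z : 'M[C]_n) (S : pred 'I_n) :
  \sum_(i | S i) \sum_(j | S j) sq (PP Z i j) =
  \sum_r \sum_s sq (\sum_(i | S i) Z r i * conjC (Z s i)).
Proof.
transitivity (Re (\sum_(i | S i) \sum_(j | S j) conjC (PP Z i j) * PP Z i j)).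
  rewrite Re_sum; apply: eq_bigr => i _; rewrite Re_sum; apply: eq_bigr => j _.
  by rewrite Re_conjMM.
rewrite keyH' Re_sum; apply: eq_bigr => r _; rewrite Re_sum; apply: eq_bigr => s _.
by rewrite mulrC Re_conjMM.
Qed.

Lemma same_split (X : 'I_n -> 'I_n -> R) :
  \sum_i \sum_(j | col j == col i) X i j =
  \sum_(a < k) \sum_(i | col i == a) \sum_(j | col j == a) X i j.
Proof.
rewrite (partition_big col predT) //=; apply: eq_bigr => a _.
by apply: eq_bigr => i /eqP <-.
Qed.

Local Notation P := (PP (Zm gp)).
Local Notation N := (PP (Zm gn)).

Lemma color_bound :
  \sum_i \sum_j sq (P i j) <= k%:R * \sum_i \sum_(j | col j == col i) sq (P i j).
Proof.
rewrite same_split.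
rewrite (eq_bigr (fun a : 'I_k => \sum_r \sum_s sq (\sum_(i | col i == a) Zm gp r i * conjC (Zm gp s i)))); last first.
  by move=> a _; apply: (sq_key _ (fun i => col i == a)).
have := sq_key (Zm gp) predT; rewrite /= => ->.
rewrite [X in _ <= _ * X]exchange_big mulr_sumr; apply: ler_sum => r _.
rewrite [X in _ <= _ * X]exchange_big mulr_sumr; apply: ler_sum => s _.
rewrite (partition_big col predT) //=.
exact: cs_sq.
Qed.

Lemma PN_same i j : col j == col i -> P i j = N i j.
Proof.
move=> /eqP h; have := F_A i j; rewrite hcol // => /eqP.
by rewrite eq_sym subr_eq0 => /eqP.
Qed.

Lemma ord_k1 (x y : 'I_k) : k = 1%N -> x = y.
Proof.
move=> e; apply: val_inj; case: x => a ha; case: y => b hb /=.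
rewrite e in ha hb; by case: a b ha hb => [|?] [|?].
Qed.

Lemma sum_sqP (a : 'I_n -> R) :
  \sum_i \sum_j sq (PP (Zm a) i j) = \sum_r (a r ^+ 2) ^+ 2.
Proof.
transitivity (Re (\sum_i \sum_j conjC (PP (Zm a) i j) * PP (Zm a) i j)).
  rewrite Re_sum; apply: eq_bigr => i _; rewrite Re_sum; apply: eq_bigr => j _.
  by rewrite Re_conjMM.
by rewrite F_same Re_sum.
Qed.

Theorem core_ineq :
  k%:R * \sum_r (Num.max (L r) 0) ^+ 2 <= (k%:R - 1) * \sum_i \sum_j (A i j) ^+ 2.
Proof.
set sp := \sum_i \sum_j sq (P i j).
set sn := \sum_i \sum_j sq (N i j).
set d := \sum_i \sum_(j | col j == col i) sq (P i j).
set p := \sum_i \sum_(j | col j != col i) sq (P i j).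
set q := \sum_i \sum_(j | col j != col i) sq (N i j).
set c := \sum_i \sum_(j | col j != col i) ip (P i j) (N i j).
have hsp : \sum_r (Num.max (L r) 0) ^+ 2 = sp.
  rewrite /sp sum_sqP; apply: eq_bigr => r _; by rewrite gp2.
have hsn : \sum_r (Num.max (- L r) 0) ^+ 2 = sn.
  rewrite /sn sum_sqP; apply: eq_bigr => r _; by rewrite gn2.
have hcross : \sum_i \sum_j ip (P i j) (N i j) = 0.
  transitivity (Re (\sum_i \sum_j conjC (P i j) * N i j)); last by rewrite F_cross.
  rewrite Re_sum; apply: eq_bigr => i _; rewrite Re_sum; apply: eq_bigr => j _; by rewrite Re_conjM.
have hA2 : \sum_i \sum_j (A i j) ^+ 2 = sp + sn.
  transitivity (\sum_i \sum_j (sq (P i j) + (-2) * ip (P i j) (N i j) + 1 * sq (N i j))).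
    apply: eq_bigr => i _; apply: eq_bigr => j _.
    by rewrite -sqR F_A sq_sub mul1r mulNr.
  by rewrite dsumE hcross mulr0 addr0 mul1r.
have split2 (F : 'I_n -> 'I_n -> R) : \sum_i \sum_j F i j =
    \sum_i \sum_(j | col j == col i) F i j + \sum_i \sum_(j | col j != col i) F i j.
  by rewrite -big_split; apply: eq_bigr => i _; rewrite (bigID (fun j => col j == col i)).
have hspd : sp = d + p by rewrite /sp split2.
have hsnd : sn = d + q.
  rewrite /sn split2; congr (_ + _); apply: eq_bigr => i _; apply: eq_bigr => j h.
  by rewrite PN_same.
have hc : c = - d.
  have := hcross; rewrite split2 => /eqP; rewrite addrC addr_eq0 => /eqP; rewrite -/c => ->.
  congr (- _); rewrite /d; apply: eq_bigr => i _; apply: eq_bigr => j h.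
  by rewrite PN_same // ip_sq.
have hnn : 0 <= p + 2 * (k%:R - 1) * c + (k%:R - 1) ^+ 2 * q.
  have -> : p + 2 * (k%:R - 1) * c + (k%:R - 1) ^+ 2 * q =
     \sum_i \sum_(j | col j != col i) sq (P i j + (k%:R - 1)%:C * N i j).
    rewrite (eq_bigr (fun i => \sum_(j | col j != col i) (sq (P i j) + (2 * (k%:R - 1)) * ip (P i j) (N i j) + (k%:R - 1) ^+ 2 * sq (N i j)))).
      by rewrite dsumE.
    by move=> i _; apply: eq_bigr => j _; rewrite sq_expand.
  by apply: sumr_ge0 => i _; apply: sumr_ge0 => j _; apply: sq_ge0.
have hk1 : k%:R = 1 :> R -> d = 0.
  move=> /eqP; rewrite pnatr_eq1 => /eqP e.
  suff : c = 0 by rewrite hc => /eqP; rewrite oppr_eq0 => /eqP.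
  apply: big1 => i _; apply: big1 => j; by rewrite (ord_k1 (col j) (col i) e) eqxx.
have hb : d + p <= k%:R * d by rewrite -hspd; exact: color_bound.
rewrite hsp hA2 hspd hsnd.
apply: final_arith => //.
- by rewrite ler1n.
- by apply: sumr_ge0 => i _; apply: sumr_ge0 => j _; apply: sq_ge0.
- by apply: sumr_ge0 => i _; apply: sumr_ge0 => j _; apply: sq_ge0.
- by apply: sumr_ge0 => i _; apply: sumr_ge0 => j _; apply: sq_ge0.
- by rewrite -hc.
Qed.

End Spec.


Lemma char_poly_conj (F : fieldType) n (Q D : 'M[F]_n) : Q \in unitmx ->
  char_poly (invmx Q *m D *m Q) = char_poly D.
Proof.
move=> hQ; rewrite /char_poly /char_poly_mx.
set M1 := map_mx polyC (invmx Q); set M2 := map_mx polyC Q.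
have h12 : M1 *m M2 = 1%:M by rewrite -map_mxM mulVmx // map_mx1.
have hX : ('X%:M : 'M[{poly F}]_n) = M1 *m 'X%:M *m M2.
  by rewrite scalar_mxC -mulmxA h12 mulmx1.
rewrite !map_mxM -/M1 -/M2 {1}hX -mulmxBl -mulmxBr !det_mulmx.
rewrite mulrC mulrA -det_mulmx.
by rewrite [M2 *m M1]mulmx1C ?det1 ?mul1r.
Qed.

Lemma sorted_pos (R : realDomainType) (s : seq R) i :
  sorted (fun x y : R => y <= x) s -> (i < count (fun x : R => (0 < x)%R) s)%N ->
  0 < nth 0 s i.
Proof.
elim: s i => [|x s IH] i hs hc; first by move: hc; rewrite /= ltn0.
case: i hc => [|i] /= hc.
  have hall : all (fun y => y <= x) s.
    by apply: (order_path_min (fun a b c h1 h2 => le_trans h2 h1)) hs.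
  case: (ltrP 0 x) => // hx.
  suff : count (fun x : R => 0 < x) s = 0%N by move=> h; move: hc; rewrite h ltNge hx.
  apply/eqP; rewrite -leqn0 leqNgt -has_count; apply/negP => /hasP [y ys hy].
  have := allP hall y ys => hyx; have := lt_le_trans hy (le_trans hyx hx); by rewrite ltxx.
apply: IH; first exact: path_sorted hs.
move: hc; case: (0 < x)%R => /= hc; [by rewrite add1n ltnS in hc | by rewrite add0n in hc; apply: ltnW].
Qed.
Lemma pair_set_eq (T : finType) (a b x y : T) : a != b -> x != y ->
  ([set a; b] == [set x; y]) = ((a, b) == (x, y)) || ((a, b) == (y, x)).
Proof.
move=> hab hxy; apply/idP/idP.
  move=> /eqP hS.
  have ha : a \in [set x; y] by rewrite -hS set21.
  have hb : b \in [set x; y] by rewrite -hS set22.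
  rewrite !in_set2 in ha hb.
  case/orP: ha => /eqP ha; case/orP: hb => /eqP hb; subst.
  - by rewrite eqxx in hab.
  - by rewrite eqxx.
  - by rewrite eqxx orbT.
  - by rewrite eqxx in hab.
by case/orP => /eqP [-> ->] //; rewrite setUC.
Qed.

Lemma edges_count (T : finType) (e : rel T) : symmetric e -> irreflexive e ->
  (\sum_x \sum_y (e x y : nat))%N = (2 * num_edges e)%N.
Proof.
move=> sym irr.
rewrite pair_big /= -big_mkcond /=.
rewrite (partition_big (fun p : T * T => [set p.1; p.2])
   (mem [set [set x; y] | x in T, y in T & e x y])) /=; last first.
  by move=> [a b] /= hab; apply/imset2P; exists a b => //; rewrite inE.
rewrite /num_edges mulnC -sum_nat_const.
apply: eq_bigr => S /imset2P [x y _]; rewrite inE /= => hxy ->.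
have nxy : x != y by apply: contraTneq hxy => ->; rewrite irr.
have -> : 2%N = ((x, y) != (y, x)).+1 by rewrite xpair_eqE (negbTE nxy).
rewrite -cards2 -sum1_card; apply: eq_bigl => [[a b]] /=.
rewrite in_set2.
case hab: (e a b) => /=.
  rewrite pair_set_eq //; apply: contraTneq hab => ->; by rewrite irr.
apply/esym/negbTE/negP => /orP [] /eqP [ha hb]; subst a b; [by rewrite hxy in hab | by rewrite sym hxy in hab].
Qed.

Theorem mainTheorem1 (R : rcfType) (T : finType) (e : rel T)
    (sym : symmetric e) (irr : irreflexive e)
    (wp : clique_number e = chromatic_number irr)
    (mu : seq R) (hmu : sorted_eigenvalues (adj_matrix R e) mu) :
  let omega := clique_number e in
  let m := num_edges e in
  let npos := count (fun x : R => 0 < x) mu in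
  let l := minn npos omega in
  \sum_(i < l) (nth 0 mu i) ^+ 2 <= (2 * m * (omega - 1))%:R / omega%:R.
Proof.
cbv zeta.
set omega := clique_number e.
set m := num_edges e.
set npos := count _ mu.
set l := minn npos omega.
case: (posnP omega) => [o0 | opos].
  have -> : l = 0%N by rewrite /l o0 minn0.
  by rewrite big_ord0 o0 invr0 mulr0.
have [f hf] : exists f : T -> 'I_omega, forall x y, e x y -> f x != f y.
  rewrite /omega wp /chromatic_number; case: ex_minnP => kk hkk _.
  case/existsP: hkk => g /forallP hg; exists (fun x => g x) => x y hxy.
  by have /forallP /(_ y) /implyP := hg x; apply.
pose A := adj_matrix R e.
pose AC := map_mx (real_complex R) A.
have hAC_herm : AC \is hermsymmx.
  apply/is_hermitianmxP; apply/matrixP => i j; rewrite !mxE expr0 mul1r.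
  by rewrite conjCR sym.
have hnorm := hermitian_normalmx hAC_herm.
move/orthomx_spectralP: (hnorm) => hsp.
have hU := spectral_unitarymx AC.
have hreal := hermitian_spectral_diag_real hAC_herm.
set Q := spectralmx AC in hsp hU.
set lam := spectral_diag AC in hsp hreal.
pose L r := complex.Re (lam 0 r).
have hL r : (L r)%:C = lam 0 r.
  by apply: RRe_real; move/mxOverP: hreal; apply.
have hQ r s : \sum_i Q r i * conjC (Q s i) = (r == s)%:R.
  have := unitarymxP hU => /matrixP /(_ r s); rewrite !mxE => <-.
  by apply: eq_bigr => i _; rewrite !mxE.
have hA i j : (A i j)%:C = \sum_r conjC (Q r i) * (L r)%:C * Q r j.
  have /matrixP/(_ i j) := hsp; rewrite /AC mxE => ->.
  rewrite invmx_unitary // mul_mx_diag !mxE; apply: eq_bigr => r _.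
  by rewrite !mxE hL.
pose col (i : 'I_#|T|) := f (enum_val i).
have hcol (i j : 'I_#|T|) : col i = col j -> A i j = 0.
  rewrite /A /adj_matrix mxE; case h: (e (enum_val i) (enum_val j)) => // hc.
  by have := hf _ _ h; rewrite -/(col i) -/(col j) hc eqxx.
have core := @core_ineq R _ _ Q L A col hQ hA hcol opos.
have hA2 : \sum_i \sum_j (A i j) ^+ 2 = (2 * m)%:R.
  transitivity (\sum_(i < #|T|) \sum_(j < #|T|) ((e (enum_val i) (enum_val j) : nat)%:R : R)).
    apply: eq_bigr => i _; apply: eq_bigr => j _; rewrite /A /adj_matrix mxE.
    by case: (e _ _); rewrite ?expr0n ?expr1n.
  rewrite /m -edges_count // natr_sum.
  rewrite (big_enum_val (A := T) (fun x => ((\sum_y (e x y : nat))%:R : R))) /=.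
  apply: eq_bigr => i _; rewrite natr_sum.
  by rewrite (big_enum_val (A := T) (fun y => ((e (enum_val i) y : nat)%:R : R))).
have hunit : Q \in unitmx := unitarymx_unit hU.
have hperm : perm_eq [seq x%:C | x <- mu] [seq (L r)%:C | r <- index_enum 'I_#|T|].
  apply: prod_XsubC_eq; rewrite !big_map.
  rewrite -(map_prod_XsubC (real_complex R)) -hmu.1 map_char_poly -/A -/AC hsp.
  rewrite char_poly_conj // char_poly_trig ?diag_mx_is_trig //.
  by apply: eq_bigr => r _; rewrite mxE eqxx mulr1n hL.
pose G (x : R) := (Num.max x 0) ^+ 2.
have hS : \sum_(x <- mu) G x = \sum_r G (L r).
  transitivity (\sum_(y <- [seq x%:C | x <- mu]) G (complex.Re y)).
    by rewrite big_map.
  by rewrite (perm_big _ hperm) big_map.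
have hlsz : (l <= size mu)%N.
  by apply: leq_trans (geq_minl _ _) _; apply: count_size.
have hLS : \sum_(i < l) (nth 0 mu i) ^+ 2 <= \sum_(x <- mu) G x.
  have -> : \sum_(i < l) (nth 0 mu i) ^+ 2 = \sum_(i < l) G (nth 0 mu i).
    apply: eq_bigr => i _; rewrite /G max_l // ltW //.
    apply: sorted_pos; first exact: hmu.2.
    exact: leq_trans (ltn_ord i) (geq_minl _ _).
  rewrite (big_nth 0) big_mkord (big_ord_widen (size mu) (fun i => G (nth 0 mu i)) hlsz).
  rewrite [X in _ <= X](bigID (fun i : 'I_(size mu) => (i < l)%N)) /= lerDl.
  by apply: sumr_ge0 => i _; apply: sqr_ge0.
apply: le_trans hLS _.
rewrite hS ler_pdivlMr ?ltr0n // natrM natrB // -hA2.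
rewrite hA2 in core.
rewrite /G; nra.
Qed.
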